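(* Let $\beta>1$, $n\in\mathbb{N}$, $C_\beta=2+\frac{2(\beta-1)^2}{2\beta-1}$ and $$h(t,\tau)=2\big(nt-\tau|\tau|^{\beta-1}\big)^2-C_\beta(t-\tau)\big(n^2t-\tau|\tau|^{2(\beta-1)}\big).$$ Then $h(t,\tau)\le0$ for all real $t,\tau$ with $|t|>n^{1/(\beta-1)}$ and $|\tau|\le n^{1/(\beta-1)}$. *)

(* Defs.v *)
From Stdlib Require Import Reals.
Open Scope R_scope.

(* Real power x^y for x >= 0 and y > 0, with the convention 0^y = 0
   (Stdlib's Rpower 0 y = exp (y * ln 0) = 1 would be wrong at 0). *)
Definition rpow (x y : R) : R := if Req_EM_T x 0 then 0 else Rpower x y.

Definition C_beta (beta : R) : R := 2 + 2 * (beta - 1) ^ 2 / (2 * beta - 1).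

Definition h (beta : R) (n : nat) (t tau : R) : R :=
  2 * (INR n * t - tau * rpow (Rabs tau) (beta - 1)) ^ 2
  - C_beta beta * (t - tau) *
    (INR n ^ 2 * t - tau * rpow (Rabs tau) (2 * (beta - 1))).

(* Main.v *)
Require Import Defs.
From Stdlib Require Import Reals Lra Psatz Lia.
From Coquelicot Require Import Coquelicot.
Open Scope R_scope.

Lemma incr0 (f df : R -> R) :
  (forall x, 0 <= x -> is_derive f x (df x)) ->
  (forall x, 0 <= x -> 0 <= df x) -> forall w, 0 <= w -> f 0 <= f w.
Proof.
  intros Hd Hp w hw.
  destruct (Req_dec w 0) as [->|hw0]; [lra|].
  destruct (MVT_gen f 0 w df) as [c [Hc Heq]].
  - intros x Hx. apply Hd. rewrite Rmin_left in Hx by lra. lra.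
  - intros x Hx. rewrite Rmin_left in Hx by lra. rewrite Rmax_right in Hx by lra.
    apply continuity_pt_filterlim. apply (ex_derive_continuous (K:=R_AbsRing) (V:=R_NormedModule)).
    eexists. apply Hd. lra.
  - rewrite Rmin_left in Hc by lra. rewrite Rmax_right in Hc by lra.
    assert (0 <= df c) by (apply Hp; lra).
    assert (0 <= df c * (w - 0)) by (apply Rmult_le_pos; lra). lra.
Qed.

Lemma cosh_mono x y : 0 <= y <= x -> exp y + exp (- y) <= exp x + exp (- x).
Proof.
  intros [h1 h2].
  assert (E: exp x + exp (-x) - (exp y + exp (-y)) = (exp x - exp y) * (1 - exp (-x) * exp (-y))).
  { assert (exp x * exp (-x) = 1) by (rewrite <- exp_plus; replace (x + -x) with 0 by ring; apply exp_0).
    assert (exp y * exp (-y) = 1) by (rewrite <- exp_plus; replace (y + -y) with 0 by ring; apply exp_0).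
    replace ((exp x - exp y) * (1 - exp (- x) * exp (- y))) with
      (exp x - (exp x * exp (-x)) * exp (-y) - exp y + exp (-x) * (exp y * exp (-y))) by ring.
    rewrite H, H0. ring. }
  assert (exp y <= exp x) by (destruct h2; [left; apply exp_increasing; lra | subst; lra]).
  assert (exp (-x) * exp (-y) <= 1).
  { rewrite <- exp_plus. rewrite <- exp_0. destruct (Req_dec (-x + -y) 0) as [e|e]; [rewrite e; lra|].
    left; apply exp_increasing; lra. }
  assert (0 <= (exp x - exp y) * (1 - exp (-x) * exp (-y))) by (apply Rmult_le_pos; lra).
  lra.
Qed.

Lemma Psi_nonneg a (ha : 0 < a) w (hw : 0 <= w) :
  0 <= a * (exp ((a+1)*w) - exp (-((a+1)*w))) - (a+1) * (exp (a*w) - exp (-(a*w))).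
Proof.
  set (f := fun w => a * (exp ((a+1)*w) - exp (-((a+1)*w))) - (a+1) * (exp (a*w) - exp (-(a*w)))).
  assert (H := incr0 f (fun w => a*(a+1)*((exp ((a+1)*w) + exp (-((a+1)*w))) - (exp (a*w) + exp (-(a*w)))))).
  assert (f 0 = 0) by (unfold f; rewrite !Rmult_0_r, Ropp_0, exp_0; ring).
  enough (f 0 <= f w) by (unfold f in *; lra).
  apply H; auto.
  - intros x _. unfold f. auto_derive; auto. ring.
  - intros x hx. apply Rmult_le_pos. nra.
    assert (H1 := cosh_mono ((a+1)*x) (a*x)). assert (exp (a*x) + exp (-(a*x)) <= exp ((a+1)*x) + exp (-((a+1)*x))) by (apply H1; nra). lra.
Qed.

Lemma Phi_nonneg a (ha : 0 < a) w (hw : 0 <= w) :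
  0 <= a^2 * (exp ((a+1)*w) + exp (-((a+1)*w))) - (a+1)^2 * (exp (a*w) + exp (-(a*w))) + 2*(2*a+1).
Proof.
  set (f := fun w => a^2 * (exp ((a+1)*w) + exp (-((a+1)*w))) - (a+1)^2 * (exp (a*w) + exp (-(a*w))) + 2*(2*a+1)).
  assert (H := incr0 f (fun w => a*(a+1)*(a * (exp ((a+1)*w) - exp (-((a+1)*w))) - (a+1) * (exp (a*w) - exp (-(a*w)))))).
  assert (f 0 = 0) by (unfold f; rewrite !Rmult_0_r, Ropp_0, exp_0; ring).
  enough (f 0 <= f w) by (unfold f in *; lra).
  apply H; auto.
  - intros x _. unfold f. auto_derive; auto. ring.
  - intros x hx. apply Rmult_le_pos. nra. apply Psi_nonneg; auto.
Qed.
Lemma key a (ha : 0 < a) v (hv : 0 < v <= 1) :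
  (2*a+1) * v * (1 - Rpower v a)^2 <= a^2 * (1 - v) * (1 - v * (Rpower v a)^2).
Proof.
  set (L := ln v).
  assert (hL : L <= 0).
  { unfold L. rewrite <- ln_1. destruct (Req_dec v 1) as [->|]; [lra|].
    left. apply ln_increasing; lra. }
  assert (P := Phi_nonneg a ha (-L) ltac:(lra)).
  set (Y := Rpower v a).
  assert (hY : Y = exp (a * L)) by reflexivity.
  assert (hv' : v = exp L) by (unfold L; rewrite exp_ln; lra).
  assert (Ypos : 0 < Y) by (rewrite hY; apply exp_pos).
  assert (E1 : exp (-((a+1)*(-L))) = v * Y).
  { rewrite hY, hv', <- exp_plus. f_equal. ring. }
  assert (E2 : exp ((a+1)*(-L)) = / (v * Y)).
  { rewrite <- E1, <- exp_Ropp. f_equal. ring. }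
  assert (E3 : exp (-(a*(-L))) = Y).
  { rewrite hY. f_equal. ring. }
  assert (E4 : exp (a*(-L)) = / Y).
  { rewrite <- E3, <- exp_Ropp. f_equal. ring. }
  rewrite E1, E2, E3, E4 in P. fold Y.
  assert (Eq : a^2 * (1 - v) * (1 - v * Y^2) - (2*a+1) * v * (1 - Y)^2 =
     (v*Y) * (a ^ 2 * (/ (v * Y) + v * Y) - (a + 1) ^ 2 * (/ Y + Y) + 2 * (2 * a + 1))).
  { field. lra. }
  assert (0 <= (v*Y) * (a ^ 2 * (/ (v * Y) + v * Y) - (a + 1) ^ 2 * (/ Y + Y) + 2 * (2 * a + 1))).
  { apply Rmult_le_pos; [nra | exact P]. }
  lra.
Qed.
Lemma alg a N nn t tau p D : 0 < a -> D = 2*a^2/(2*a+1) -> 0 < N -> 0 < nn -> N < t ->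
  0 < tau <= N -> 0 <= p <= nn ->
  (2*a+1)*tau*N*(nn-p)^2 <= a^2*(N-tau)*(N*nn^2 - tau*p^2) ->
  2*(nn*t - tau*p)^2 - (2+D)*(t-tau)*(nn^2*t - tau*p^2) <= 0.
Proof.
  intros ha hD hN hn hNt htau hp K.
  assert (hDp : 0 < D) by (subst; apply Rdiv_lt_0_compat; nra).
  assert (K2 : 2*N*tau*(nn-p)^2 <= D*(N-tau)*(N*nn^2 - tau*p^2)).
  { assert (E1 : 2*N*tau*(nn-p)^2 = (2/(2*a+1)) * ((2*a+1)*tau*N*(nn-p)^2)) by (field; lra).
    assert (E2 : D*(N-tau)*(N*nn^2 - tau*p^2) = (2/(2*a+1)) * (a^2*(N-tau)*(N*nn^2 - tau*p^2)))
      by (subst; field; lra).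
    rewrite E1, E2. apply Rmult_le_compat_l; [apply Rlt_le, Rdiv_lt_0_compat; lra | exact K]. }
  set (B := 2*(nn-p)^2 + D*(nn^2+p^2)).
  assert (KB : N*tau*B <= D*(N^2*nn^2 + tau^2*p^2)).
  { unfold B. nra. }
  assert (Eh : 2*(nn*t - tau*p)^2 - (2+D)*(t-tau)*(nn^2*t - tau*p^2)
     = -D*(nn^2*t^2 + tau^2*p^2) + t*tau*B) by (unfold B; ring).
  rewrite Eh.
  assert (S1 : t * (N*tau*B) <= t * (D*(N^2*nn^2 + tau^2*p^2))) by (apply Rmult_le_compat_l; lra).
  assert (tp : tau*p <= N*nn) by (apply Rmult_le_compat; lra).
  assert (tp2 : tau^2*p^2 <= N*nn^2*t).
  { assert (0 <= tau*p) by nra.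
    assert ((tau*p)^2 <= (N*nn)^2) by (apply pow_incr; lra).
    assert (N*nn^2*N <= N*nn^2*t) by (apply Rmult_le_compat_l; nra). nra. }
  assert (F : 0 <= D*(t-N)*(N*nn^2*t - tau^2*p^2)).
  { apply Rmult_le_pos; [apply Rmult_le_pos|]; lra. }
  assert (G : N * (-D*(nn^2*t^2 + tau^2*p^2) + t*tau*B) <= 0) by nra.
  destruct (Rle_or_lt (-D*(nn^2*t^2 + tau^2*p^2) + t*tau*B) 0); auto.
  assert (0 < N * (-D*(nn^2*t^2 + tau^2*p^2) + t*tau*B)) by (apply Rmult_lt_0_compat; lra). lra.
Qed.
Lemma alg_neg (nn t tau : R) p D : 0 < D -> 0 < t -> tau <= 0 -> 0 <= p ->
  2*(nn*t - tau*p)^2 - (2+D)*(t-tau)*(nn^2*t - tau*p^2) <= 0.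
Proof.
  intros hD ht htau hp.
  set (B := 2*(nn-p)^2 + D*(nn^2+p^2)).
  assert (Eh : 2*(nn*t - tau*p)^2 - (2+D)*(t-tau)*(nn^2*t - tau*p^2)
     = -D*(nn^2*t^2 + tau^2*p^2) + t*tau*B) by (unfold B; ring).
  rewrite Eh.
  assert (0 <= B) by (unfold B; assert (0 <= (nn-p)^2) by apply pow2_ge_0; assert (0 <= nn^2) by apply pow2_ge_0; assert (0 <= p^2) by apply pow2_ge_0; nra).
  assert (t*tau <= 0) by nra.
  assert (t*tau*B <= 0) by nra.
  assert (0 <= D*(nn^2*t^2 + tau^2*p^2)) by (apply Rmult_le_pos; [lra| assert (0 <= (nn*t)^2) by apply pow2_ge_0; assert (0 <= (tau*p)^2) by apply pow2_ge_0; nra]).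
  lra.
Qed.

Lemma core a N nn D t tau p : 0 < a -> D = 2*a^2/(2*a+1) -> 0 < N -> nn = Rpower N a ->
  N < t -> Rabs tau <= N -> 0 <= p <= nn -> (0 < tau -> p = Rpower tau a) ->
  2*(nn*t - tau*p)^2 - (2+D)*(t-tau)*(nn^2*t - tau*p^2) <= 0.
Proof.
  intros ha hD hN hnn ht htau hp hpt.
  assert (hnp : 0 < nn) by (rewrite hnn; apply exp_pos).
  assert (hDp : 0 < D) by (subst D; apply Rdiv_lt_0_compat; nra).
  destruct (Rle_or_lt tau 0) as [hneg|hpos].
  - apply alg_neg; lra.
  - assert (tauN : tau <= N) by (rewrite Rabs_right in htau by lra; lra).
    apply (alg a N); try lra.
    specialize (hpt hpos).
    assert (hv : 0 < tau / N <= 1).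
    { split. apply Rdiv_lt_0_compat; lra.
      apply (Rmult_le_reg_r N); [lra|]. unfold Rdiv. rewrite Rmult_assoc, Rinv_l by lra. lra. }
    assert (Ev : Rpower (tau / N) a = p / nn).
    { unfold Rdiv. rewrite <- Rpower_mult_distr by (try apply Rinv_0_lt_compat; lra).
      rewrite hpt, hnn. f_equal. unfold Rpower. rewrite ln_Rinv by lra.
      rewrite <- exp_Ropp. f_equal. ring. }
    assert (Kk := key a ha (tau/N) hv). rewrite Ev in Kk.
    assert (E1 : (2*a+1)*tau*N*(nn-p)^2 = ((2 * a + 1) * (tau / N) * (1 - p / nn) ^ 2) * (N^2*nn^2))
      by (field; lra).
    assert (E2 : a^2*(N-tau)*(N*nn^2 - tau*p^2) = (a ^ 2 * (1 - tau / N) * (1 - tau / N * (p / nn) ^ 2)) * (N^2*nn^2))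
      by (field; lra).
    rewrite E1, E2. apply Rmult_le_compat_r; [nra | exact Kk].
Qed.
Theorem lemma4p1 (beta : R) (n : nat) (t tau : R) :
  1 < beta ->
  rpow (INR n) (1 / (beta - 1)) < Rabs t ->
  Rabs tau <= rpow (INR n) (1 / (beta - 1)) ->
  h beta n t tau <= 0.
Proof.
  intros hb ht htau.
  set (a := beta - 1). assert (ha : 0 < a) by (unfold a; lra).
  set (D := 2*a^2/(2*a+1)).
  assert (hC : C_beta beta = 2 + D) by (unfold C_beta, D, a; f_equal; f_equal; ring).
  unfold h. rewrite hC.
  set (p := rpow (Rabs tau) (beta - 1)).
  assert (hq : rpow (Rabs tau) (2 * (beta - 1)) = p^2).
  { unfold p, rpow. destruct (Req_EM_T (Rabs tau) 0); [ring|].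
    replace (2*(beta-1)) with ((beta-1)+(beta-1)) by ring. rewrite Rpower_plus. ring. }
  rewrite hq.
  destruct n as [|n'].
  - simpl INR in *. unfold rpow in htau. destruct (Req_EM_T 0 0) as [_|c]; [|congruence].
    assert (tau = 0) by (pose proof (Rabs_pos tau); destruct (Rabs_pos tau); [lra|];
       apply Rabs_eq_0; lra).
    subst tau. lra.
  - set (nn := INR (S n')). assert (hn : 0 < nn) by (unfold nn; apply lt_0_INR; lia).
    unfold rpow in ht, htau. destruct (Req_EM_T (INR (S n')) 0) as [c|_]; [fold nn in c; lra|].
    fold nn in ht, htau.
    set (N := Rpower nn (1 / (beta - 1))) in *.
    assert (hN : 0 < N) by apply exp_pos.
    assert (hnn : nn = Rpower N a).
    { unfold N, a. rewrite Rpower_mult. replace (1/(beta-1)*(beta-1)) with 1 by (field; lra).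
      rewrite Rpower_1; auto. }
    assert (hp : 0 <= p <= nn).
    { unfold p, rpow. destruct (Req_EM_T (Rabs tau) 0); [lra|]. split.
      left; apply exp_pos. rewrite hnn. apply Rle_Rpower_l; [fold a; lra|].
      split; [pose proof (Rabs_pos tau); lra | exact htau]. }
    destruct (Rle_or_lt 0 t) as [tpos|tneg].
    + rewrite Rabs_right in ht by lra.
      apply (core a N nn D t tau p); auto.
      intros tp. unfold p, rpow. destruct (Req_EM_T (Rabs tau) 0); [rewrite Rabs_right in e; lra|].
      rewrite Rabs_right by lra. reflexivity.
    + rewrite Rabs_left in ht by lra.
      replace (2 * (nn * t - tau * p) ^ 2 - (2 + D) * (t - tau) * (nn ^ 2 * t - tau * p ^ 2))
        with (2 * (nn * (-t) - (-tau) * p) ^ 2 - (2 + D) * ((-t) - (-tau)) * (nn ^ 2 * (-t) - (-tau) * p ^ 2)) by ring.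
      apply (core a N nn D (-t) (-tau) p); auto.
      rewrite Rabs_Ropp; auto.
      intros tp. unfold p, rpow. destruct (Req_EM_T (Rabs tau) 0); [rewrite Rabs_left in e; lra|].
      rewrite Rabs_left by lra. reflexivity.
Qed.
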